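(* Setting: $\Phi(w)=f(w)+g(w)+h(w)$ on $\mathbb{R}^d$ with $f=\frac1n\sum_{j=1}^n f_j$, each $f_j$ $L$-smooth; $g:\mathbb{R}^d\to\mathbb{R}$ such that for every $\lambda>0$ and $w$ the minimum of $x\mapsto\frac{1}{2\lambda}\|w-x\|_2^2+g(x)$ is attained at a chosen point $\zeta^\lambda(w)$; $h$ proper, closed, convex. Let $e_\lambda g(w)=\frac{1}{2\lambda}\|w-\zeta^\lambda(w)\|_2^2+g(\zeta^\lambda(w))$, $\tilde\Phi_\lambda=f+e_\lambda g+h$, and assume $\tilde\Phi_\lambda$ has a global minimizer $w^*_\lambda$. Algorithm VRSPA with positive integers $S$ (number of epochs), $m$ (epoch length), batch size $b=m^2$, $\theta\in\mathbb{R}$, $\lambda=(Sm)^{-\theta}$, $L_\lambda=L+(Sm)^\theta$, $\gamma=\frac{1}{6L_\lambda}$, initial point $\tilde w^1$: for $k=1,\dots,S$: set $w^k_1=\tilde w^k$, $G^k=\nabla f(\tilde w^k)$; for $t=1,\dots,m$: draw a multiset $I$ of $b$ indices i.i.d. uniformly from $\{1,\dots,n\}$ (independent of the past), set $V^k_t=\frac1b\sum_{j\in I}\left(\nabla f_j(w^k_t)-\nabla f_j(\tilde w^k)\right)+G^k+\frac1\lambda\left(w^k_t-\zeta^\lambda(w^k_t)\right)$ and $w^k_{t+1}=\operatorname{prox}_{\gamma h}(w^k_t-\gamma V^k_t)$; then set $\tilde w^{k+1}=w^k_{m+1}$. Finally draw $(R,T)$ uniformly from $\{1,\dots,S\}\times\{1,\dots,m\}$.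 Claim: with $\mathcal{G}^{R,T}_{\gamma,E}(w^R_T):=\frac1\gamma\left(w^R_T-\operatorname{prox}_{\gamma h}\left(w^R_T-\gamma\left(\nabla f(w^R_T)+\frac1\lambda(w^R_T-\zeta^\lambda(w^R_T))\right)\right)\right)$, $$\mathbb{E}\|\mathcal{G}^{R,T}_{\gamma,E}(w^R_T)\|_2^2\le\tilde{\mathcal{D}}\,\frac{L+(Sm)^\theta}{Sm},$$ where $\tilde{\mathcal{D}}=36\left(\tilde\Phi_\lambda(\tilde w^1)-\tilde\Phi_\lambda(w^*_\lambda)\right)$.
   Context: $\operatorname{prox}_{\gamma h}(v)=\arg\min_x\left(\frac{1}{2\gamma}\|v-x\|_2^2+h(x)\right)$. A function is $L$-smooth if it is differentiable with $L$-Lipschitz gradient. *)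

(* Defs.v *)
From HB Require Import structures.
From mathcomp Require Import all_boot all_order all_algebra.
From mathcomp Require Import all_classical all_reals all_analysis.
Import Order.TTheory GRing.Theory Num.Theory.
Import numFieldNormedType.Exports.

Set Implicit Arguments.
Unset Strict Implicit.
Unset Printing Implicit Defensive.

Local Open Scope ring_scope.

Section VRSPA.
Context {R : realType} {d : nat}.
Local Notation vec := 'rV[R]_d.

Definition dotv (u v : vec) : R := \sum_(i < d) u 0 i * v 0 i.
Definition sqnorm (u : vec) : R := dotv u u.
Definition enorm (u : vec) : R := Num.sqrt (sqnorm u).

Definition is_gradient (f : vec -> R) (G : vec -> vec) : Prop :=
  forall x, differentiable f x /\ forall v, 'd f x v = dotv (G x) v.

Definition lipschitz_e (F : vec -> vec) (L : R) : Prop :=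
  forall x y, enorm (F x - F y) <= L * enorm (x - y).

Definition L_smooth (f : vec -> R) (G : vec -> vec) (L : R) : Prop :=
  is_gradient f G /\ lipschitz_e G L.

Definition proper_fun (h : vec -> \bar R) : Prop :=
  (forall x, h x <> -oo%E) /\ exists x, h x <> +oo%E.
Definition closed_fun (h : vec -> \bar R) : Prop :=
  closed [set p : vec * R | (h p.1 <= p.2%:E)%E].
Definition convex_fun (h : vec -> \bar R) : Prop :=
  forall (x y : vec) (t : R), 0 < t < 1 ->
    (h ((1 - t) *: x + t *: y)%R <= (1 - t)%:E * h x + t%:E * h y)%E.

Definition is_prox (gam : R) (h : vec -> \bar R) (P : vec -> vec) : Prop :=
  forall v x, (((2 * gam)^-1 * sqnorm (v - P v))%:E + h (P v)
               <= ((2 * gam)^-1 * sqnorm (v - x))%:E + h x)%E.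

Definition is_moreau_selection (g : vec -> R) (zeta : R -> vec -> vec) : Prop :=
  forall lam, 0 < lam -> forall w x,
    (2 * lam)^-1 * sqnorm (w - zeta lam w) + g (zeta lam w)
    <= (2 * lam)^-1 * sqnorm (w - x) + g x.

Definition env (g : vec -> R) (zeta : R -> vec -> vec) (lam : R) (w : vec) : R :=
  (2 * lam)^-1 * sqnorm (w - zeta lam w) + g (zeta lam w).

Variable n : nat.
Implicit Types (fj : 'I_n -> vec -> R) (gfj : 'I_n -> vec -> vec).

Definition favg fj (w : vec) : R := n%:R^-1 * \sum_(j < n) fj j w.
Definition gavg gfj (w : vec) : vec := n%:R^-1 *: \sum_(j < n) gfj j w.

Definition PhiT fj (g : vec -> R) zeta (h : vec -> \bar R) (lam : R) (w : vec)
  : \bar R := ((favg fj w + env g zeta lam w)%:E + h w)%E.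

Definition vr_step gfj zeta (lam gam : R) (P : vec -> vec) (b : nat)
  (I : seq 'I_n) (anchor w : vec) : vec :=
  P (w - gam *: (b%:R^-1 *: \sum_(j <- I) (gfj j w - gfj j anchor)
                 + gavg gfj anchor + lam^-1 *: (w - zeta lam w))).

(* inner_iter ... anchor t = w^k_{t+1} (with w^k_1 = anchor), using the
   index multisets dr 0, dr 1, ... *)
Fixpoint inner_iter gfj zeta lam gam P b (dr : nat -> seq 'I_n)
  (anchor : vec) (t : nat) : vec :=
  if t is t'.+1 then
    vr_step gfj zeta lam gam P b (dr t') anchor
            (inner_iter gfj zeta lam gam P b dr anchor t')
  else anchor.

(* anchor_iter ... k = tilde w^{k+1} *)
Fixpoint anchor_iter gfj zeta lam gam P b (m : nat)
  (dr : nat -> nat -> seq 'I_n) (w1 : vec) (k : nat) : vec :=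
  if k is k'.+1 then
    inner_iter gfj zeta lam gam P b (dr k')
               (anchor_iter gfj zeta lam gam P b m dr w1 k') m
  else w1.

(* the sample space: for each epoch k < S and inner step t < m, a b-tuple
   of indices in {0,...,n-1}; the uniform distribution on it is exactly
   i.i.d. uniform draws, independent across steps *)
Definition sample_space (S m b : nat) : finType :=
  {ffun 'I_S * 'I_m -> b.-tuple 'I_n}.

Definition draws (S m b : nat) (om : sample_space S m b) (k t : nat) : seq 'I_n :=
  match (insub k : option 'I_S), (insub t : option 'I_m) with
  | Some k', Some t' => tval (om (k', t'))
  | _, _ => [::]
  end.

(* w^{k+1}_{t+1}(om) for 0-based k < S, t < m *)
Definition vrspa_iter gfj zeta lam gam P (S m b : nat) (w1 : vec)
  (om : sample_space S m b) (k t : nat) : vec :=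
  inner_iter gfj zeta lam gam P b (draws om k)
             (anchor_iter gfj zeta lam gam P b m (draws om) w1 k) t.

Definition grad_map gfj zeta (lam gam : R) (P : vec -> vec) (w : vec) : vec :=
  gam^-1 *: (w - P (w - gam *: (gavg gfj w + lam^-1 *: (w - zeta lam w)))).

(* E || G(w^R_T) ||^2, with om uniform on the sample space and (R,T)
   uniform on {1..S} x {1..m}, independent of om *)
Definition vrspa_expected_sqgrad gfj zeta lam gam P (S m b : nat) (w1 : vec) : R :=
  #|{: sample_space S m b}|%:R^-1 *
  \sum_(om : sample_space S m b)
     ((S * m)%:R^-1 *
      \sum_(k < S) \sum_(t < m)
         sqnorm (grad_map gfj zeta lam gam P
                   (vrspa_iter gfj zeta lam gam P w1 om k t))).

End VRSPA.

(* Main.v *)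
Require Import Defs.
From HB Require Import structures.
From mathcomp Require Import all_boot all_order all_algebra.
From mathcomp Require Import all_classical all_reals all_analysis.
From mathcomp Require Import ring lra.
Import Order.TTheory GRing.Theory Num.Theory.
Import numFieldNormedType.Exports.
Local Open Scope ring_scope.

Set Implicit Arguments.
Unset Strict Implicit.
Unset Printing Implicit Defensive.

Section Vec.
Context {R : realType} {d : nat}.
Local Notation vec := 'rV[R]_d.
Implicit Types u v w : vec.

Lemma dotvC u v : dotv u v = dotv v u.
Proof. by apply: eq_bigr => i _; rewrite mulrC. Qed.

Lemma dotvDl u v w : dotv (u + v) w = dotv u w + dotv v w.
Proof. by rewrite /dotv -big_split; apply: eq_bigr => i _; rewrite mxE mulrDl. Qed.

Lemma dotvZl (c : R) u v : dotv (c *: u) v = c * dotv u v.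
Proof. by rewrite /dotv mulr_sumr; apply: eq_bigr => i _; rewrite mxE mulrA. Qed.

Lemma dotvNl u v : dotv (- u) v = - dotv u v.
Proof. by rewrite -scaleN1r dotvZl mulN1r. Qed.

Lemma dotvBl u v w : dotv (u - v) w = dotv u w - dotv v w.
Proof. by rewrite dotvDl dotvNl. Qed.

Lemma dotvDr u v w : dotv w (u + v) = dotv w u + dotv w v.
Proof. by rewrite dotvC dotvDl !(dotvC w). Qed.
Lemma dotvZr (c : R) u v : dotv v (c *: u) = c * dotv v u.
Proof. by rewrite dotvC dotvZl dotvC. Qed.
Lemma dotvNr u v : dotv v (- u) = - dotv v u.
Proof. by rewrite dotvC dotvNl dotvC. Qed.
Lemma dotvBr u v w : dotv w (u - v) = dotv w u - dotv w v.
Proof. by rewrite dotvDr dotvNr. Qed.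

Lemma dotv0l v : dotv 0 v = 0.
Proof. by rewrite /dotv big1 // => i _; rewrite mxE mul0r. Qed.
Lemma dotv0r v : dotv v 0 = 0.
Proof. by rewrite dotvC dotv0l. Qed.

Lemma dotv_suml (I : Type) (r : seq I) (F : I -> vec) v :
  dotv (\sum_(i <- r) F i) v = \sum_(i <- r) dotv (F i) v.
Proof.
elim: r => [|a r IH]; first by rewrite !big_nil dotv0l.
by rewrite !big_cons dotvDl IH.
Qed.

Lemma dotv_sumr (I : Type) (r : seq I) (F : I -> vec) v :
  dotv v (\sum_(i <- r) F i) = \sum_(i <- r) dotv v (F i).
Proof. by rewrite dotvC dotv_suml; apply: eq_bigr => i _; rewrite dotvC. Qed.

Lemma sqnorm_ge0 v : 0 <= sqnorm v.
Proof. by apply: sumr_ge0 => i _; rewrite -expr2 sqr_ge0. Qed.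

Lemma sqnormD u v : sqnorm (u + v) = sqnorm u + 2 * dotv u v + sqnorm v.
Proof. rewrite /sqnorm dotvDl !dotvDr (dotvC v u); lra. Qed.

Lemma sqnormB u v : sqnorm (u - v) = sqnorm u - 2 * dotv u v + sqnorm v.
Proof. rewrite /sqnorm dotvDl !dotvDr !dotvNl !dotvNr (dotvC v u); lra. Qed.

Lemma sqnormZ (c : R) v : sqnorm (c *: v) = c ^+ 2 * sqnorm v.
Proof. by rewrite /sqnorm dotvZl dotvZr mulrA expr2. Qed.

Lemma sqnormN v : sqnorm (- v) = sqnorm v.
Proof. by rewrite /sqnorm dotvNl dotvNr opprK. Qed.

Lemma young (s : R) u v : 0 < s -> 2 * dotv u v <= s * sqnorm u + s^-1 * sqnorm v.
Proof.
move=> s0.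
have := sqnorm_ge0 (s *: u - v).
rewrite sqnormB sqnormZ dotvZl => H.
have H2 : s * (2 * dotv u v) <= s ^+ 2 * sqnorm u + sqnorm v by lra.
rewrite -(ler_pM2l s0) (le_trans H2) //.
by rewrite mulrDr mulrA -expr2 mulrA mulfV ?gt_eqF // mul1r.
Qed.

Lemma young1 u v : 2 * dotv u v <= sqnorm u + sqnorm v.
Proof. by have := @young 1 u v ltr01; rewrite invr1 !mul1r. Qed.

Lemma sqnorm_eq0 v : sqnorm v = 0 -> v = 0.
Proof.
move=> H; apply/rowP => i; rewrite mxE.
have H0 : forall j : 'I_d, predT j -> 0 <= v 0 j * v 0 j.
  by move=> j _; rewrite -expr2 sqr_ge0.
have := @psumr_eq0P _ _ _ _ H0 H i isT.
by move/eqP; rewrite mulf_eq0 orbb => /eqP.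
Qed.

Lemma enorm_ge0 v : 0 <= enorm v.
Proof. exact: sqrtr_ge0. Qed.

Lemma enorm_sq v : enorm v ^+ 2 = sqnorm v.
Proof. by rewrite /enorm sqr_sqrtr // sqnorm_ge0. Qed.

Lemma cauchy_schwarz u v : dotv u v <= enorm u * enorm v.
Proof.
have [u0|] := eqVneq (enorm u) 0.
  have : sqnorm u = 0 by rewrite -enorm_sq u0 expr0n.
  by move/sqnorm_eq0 => ->; rewrite dotv0l mulr_ge0 // enorm_ge0.
have [v0|] := eqVneq (enorm v) 0.
  have : sqnorm v = 0 by rewrite -enorm_sq v0 expr0n.
  by move/sqnorm_eq0 => ->; rewrite dotv0r mulr_ge0 // enorm_ge0.
move=> nv nu.
have pu : 0 < enorm u by rewrite lt_def nu enorm_ge0.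
have pv : 0 < enorm v by rewrite lt_def nv enorm_ge0.
have := @young (enorm v / enorm u) u v (divr_gt0 pv pu).
rewrite -!enorm_sq invf_div.
have -> : enorm v / enorm u * enorm u ^+ 2 = enorm u * enorm v.
  by rewrite expr2 mulrA divfK ?gt_eqF // mulrC.
have -> : enorm u / enorm v * enorm v ^+ 2 = enorm u * enorm v.
  by rewrite expr2 mulrA divfK ?gt_eqF.
lra.
Qed.

Lemma enormZ (c : R) v : enorm (c *: v) = `|c| * enorm v.
Proof. by rewrite /enorm sqnormZ sqrtrM ?sqr_ge0 // sqrtr_sqr. Qed.

End Vec.

Set Implicit Arguments.
Unset Strict Implicit.
Unset Printing Implicit Defensive.

Section Desc.
Context {R : realType} {d : nat}.
Local Notation vec := 'rV[R]_d.

Lemma descent (f : vec -> R) (G : vec -> vec) (L : R) (x y : vec) :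
  L_smooth f G L -> f y <= f x + dotv (G x) (y - x) + L * sqnorm (y - x).
Proof.
move=> [Hg Hl].
set v := y - x.
pose aff := (cst x + ( *:%R^~ v)) : R -> vec.
have Haff t : is_diff t aff (0 + ( *:%R^~ v)) by exact: is_diffD.
have Hh t : is_diff t (f \o aff) ('d f (aff t) \o (0 + ( *:%R^~ v))).
  apply: is_diff_comp; have [Hd _] := Hg (aff t).
  exact: differentiableP.
have Hder (t : R) : is_derive t (1 : R) (f \o aff) (dotv (G (aff t)) v).
  have Hd : differentiable (f \o aff) t by case: (Hh t).
  have := derivableP (@diff_derivable _ _ _ (f \o aff) t 1 Hd).
  rewrite deriveE // (@diff_val _ _ _ _ _ _ _ (Hh t)) /=.
  have [_ ->] := Hg (aff t).
  by rewrite add0r scale1r.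
have Hcont : {within `[0, 1], continuous (f \o aff)}%classic.
  apply: continuous_subspaceT => t.
  apply: differentiable_continuous; by case: (Hh t).
have [c /[!in_itv] /= /andP [c0 c1] Hmvt] :=
  MVT ltr01 (fun t _ => Hder t) Hcont.
have affE t : aff t = x + t *: v by [].
have E1 : (f \o aff) 1 = f y by rewrite /= affE scale1r /v addrC subrK.
have E0 : (f \o aff) 0 = f x by rewrite /= affE scale0r addr0.
rewrite -/(comp f aff 1) -/(comp f aff 0) E1 E0 subr0 mulr1 in Hmvt.
have -> : f y = f x + dotv (G (aff c)) v by rewrite -Hmvt addrC subrK.
rewrite -addrA lerD2l.
have -> : dotv (G (aff c)) v = dotv (G x) v + dotv (G (aff c) - G x) v.
  by rewrite dotvBl addrC subrK.
rewrite lerD2l (le_trans (cauchy_schwarz _ _)) //.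
have HL := Hl (aff c) x.
have E2 : aff c - x = c *: v by rewrite affE addrC addKr.
rewrite E2 enormZ (ger0_norm (ltW c0)) in HL.
rewrite -enorm_sq expr2 mulrA.
have := enorm_ge0 v; have := enorm_ge0 (G (aff c) - G x).
move: HL c0 c1; set e := enorm v; set D := enorm _.
move=> HL c0 c1 h1 h2.
have h3 : 0 <= L * c * e by rewrite -mulrA; exact: le_trans h1 HL.
have h4 : 0 <= L * e.
  by move: h3; rewrite mulrAC pmulr_lge0.
have h5 : 0 <= (L * e) * e * (1 - c) by apply: mulr_ge0; [exact: mulr_ge0 | rewrite subr_ge0 ltW].
have h6 : D * e <= (L * (c * e)) * e by rewrite ler_wpM2r.
nra.
Qed.
End Desc.

Set Implicit Arguments.
Unset Strict Implicit.
Unset Printing Implicit Defensive.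

Section Prox.
Context {R : realType} {d : nat}.
Local Notation vec := 'rV[R]_d.

Lemma lim_lemma (X c : R) : 0 <= c -> (forall t, 0 < t < 1 -> 0 <= X + t * c) -> 0 <= X.
Proof.
move=> c0 H; rewrite leNgt; apply/negP => X0.
have den : 0 < 2 * (c - X + 1) by lra.
set t := - X / (2 * (c - X + 1)).
have t0 : 0 < t by rewrite /t divr_gt0 // oppr_gt0.
have t1 : t < 1 by rewrite /t ltr_pdivrMr // mul1r; lra.
have := H t; rewrite t0 t1 => /(_ isT) H1.
have E : t * (2 * (c - X + 1)) = - X by rewrite /t divfK // gt_eqF.
have h : t * c <= t * (c - X + 1) by rewrite ler_pM2l //; lra.
lra.
Qed.

Lemma prox_fin gam (h : vec -> \bar R) P v :
  proper_fun h -> is_prox gam h P -> h (P v) \is a fin_num.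
Proof.
move=> [hN [z hz]] Hp.
have := Hp v z.
have hzN := hN z; have hpN := hN (P v).
case Ez: (h z) hz hzN => [r| |] //= _ _.
case Ep: (h (P v)) hpN => [q| |] //= _.
Qed.

Lemma prox_subgrad gam (h : vec -> \bar R) P v z :
  0 < gam -> convex_fun h -> proper_fun h -> is_prox gam h P ->
  h z \is a fin_num ->
  fine (h (P v)) + gam^-1 * dotv (v - P v) (z - P v) <= fine (h z).
Proof.
move=> g0 Hc Hpr Hp hz.
have hp := prox_fin v Hpr Hp.
set p := P v; set w := z - p.
set X := fine (h z) - fine (h p) - gam^-1 * dotv (v - p) w.
suff : 0 <= X by rewrite /X; lra.
apply: (@lim_lemma X ((2 * gam)^-1 * sqnorm w)).
  by rewrite mulr_ge0 ?sqnorm_ge0 // invr_ge0 mulr_ge0 // ltW.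
move=> t /andP [t0 t1].
set y := (1 - t) *: p + t *: z.
have Hy := Hc p z t (introT andP (conj t0 t1)).
have Hq := Hp v y.
rewrite -(fineK hp) -(fineK hz) -!EFinM -EFinD in Hy.
have hyN : h y <> -oo%E by case: Hpr.
have hyf : h y \is a fin_num.
  rewrite fin_numE; apply/andP; split; first exact/eqP.
  by apply/eqP => E; rewrite E in Hy.
rewrite -/p -(fineK hp) -(fineK hyf) -!EFinD lee_fin in Hq.
rewrite -(fineK hyf) lee_fin in Hy.
have Ey : v - y = (v - p) - t *: w.
  by rewrite /y /w scalerBr scalerBl scale1r; apply/rowP => i; rewrite !mxE; lra.
rewrite Ey (sqnormB (v - p) (t *: w)) sqnormZ dotvZr in Hq.
set F := fine (h y) in Hq Hy.
set S := sqnorm w in Hq *; set Dt := dotv (v - p) w in Hq *.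
set A := sqnorm (v - p) in Hq.
set hP := fine (h p) in Hq Hy *; set hZ := fine (h z) in Hy *.
have HH : 0 <= t * (X + t * ((2 * gam)^-1 * S)).
  rewrite /X.
  have -> : t * (hZ - hP - gam^-1 * Dt + t * ((2 * gam)^-1 * S)) =
     (2 * gam)^-1 * (t ^+ 2 * S - 2 * (t * Dt)) + (t * hZ + - t * hP).
    rewrite invfM; field; rewrite gt_eqF //.
  lra.
by rewrite pmulr_rge0 in HH.
Qed.


Lemma prox_nonexp gam (h : vec -> \bar R) P a b :
  0 < gam -> convex_fun h -> proper_fun h -> is_prox gam h P ->
  sqnorm (P a - P b) <= sqnorm (a - b).
Proof.
move=> g0 Hc Hpr Hp.
have H1 := prox_subgrad a g0 Hc Hpr Hp (prox_fin b Hpr Hp).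
have H2 := prox_subgrad b g0 Hc Hpr Hp (prox_fin a Hpr Hp).
set p := P a in H1 H2 *; set q := P b in H1 H2 *.
have H3 : gam^-1 * (dotv (a - p) (q - p) + dotv (b - q) (p - q)) <= 0 by lra.
rewrite pmulr_rle0 ?invr_gt0 // in H3.
have H4 := young1 (a - b) (p - q).
rewrite /sqnorm in H4 *.
move: H3 H4; rewrite !dotvBl !dotvBr ?dotvBl.
rewrite ?(dotvC q p) ?(dotvC b a) ?(dotvC p a) ?(dotvC q a) ?(dotvC p b) ?(dotvC q b).
lra.
Qed.

End Prox.

Set Implicit Arguments.
Unset Strict Implicit.
Unset Printing Implicit Defensive.

Section Step.
Context {R : realType} {d : nat}.
Local Notation vec := 'rV[R]_d.
Variable n : nat.
Variables (fj : 'I_n -> vec -> R) (gfj : 'I_n -> vec -> vec) (L : R).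
Variables (g : vec -> R) (zeta : R -> vec -> vec) (h : vec -> \bar R).

Definition Phir lam (x : vec) : R := favg fj x + env g zeta lam x + fine (h x).
Definition gradF lam (x : vec) : vec := gavg gfj x + lam^-1 *: (x - zeta lam x).

Lemma favg_descent x y : (0 < n)%N -> (forall j, L_smooth (fj j) (gfj j) L) ->
  favg fj y <= favg fj x + dotv (gavg gfj x) (y - x) + L * sqnorm (y - x).
Proof.
move=> n0 Hs.
rewrite /favg /gavg dotvZl dotv_suml -mulrDr.
have -> : L * sqnorm (y - x) = n%:R^-1 * \sum_(j < n) (L * sqnorm (y - x)).
  have nz : n%:R != 0 :> R by rewrite pnatr_eq0 -lt0n.
  by rewrite sumr_const card_ord; apply/(mulfI nz); rewrite [RHS]mulrA mulfV // mul1r mulr_natl.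
rewrite -mulrDr ler_wpM2l ?invr_ge0 ?ler0n // -!big_split /=.
by apply: ler_sum => j _; apply: descent.
Qed.

Lemma env_descent lam x y : 0 < lam -> is_moreau_selection g zeta ->
  env g zeta lam y <= env g zeta lam x + lam^-1 * dotv (x - zeta lam x) (y - x)
                      + (2 * lam)^-1 * sqnorm (y - x).
Proof.
move=> l0 Hm.
have H := Hm lam l0 y (zeta lam x).
rewrite /env (le_trans H) //.
have -> : y - zeta lam x = (y - x) + (x - zeta lam x) by rewrite addrA subrK.
rewrite sqnormD dotvC invfM.
have E : lam^-1 = 2^-1 * lam^-1 * 2 by rewrite mulrAC mulVf ?mul1r.
rewrite {2}E; lra.
Qed.


Lemma step_ineq lam gam D (m : nat) c1 P x xt v :
  0 < lam -> 0 <= L -> D = L + lam^-1 -> gam = (6 * D)^-1 -> (0 < m)%N ->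
  0 <= c1 -> c1 * (1 + 2 * m%:R) <= 2 * D ->
  (0 < n)%N -> (forall j, L_smooth (fj j) (gfj j) L) ->
  is_moreau_selection g zeta -> convex_fun h -> proper_fun h ->
  is_prox gam h P -> h x \is a fin_num ->
  Phir lam (P (x - gam *: v)) + c1 * sqnorm (P (x - gam *: v) - xt)
  <= Phir lam x + c1 * (1 + (2 * m%:R)^-1) * sqnorm (x - xt)
     + 11 / 36 * D^-1 * sqnorm (v - gradF lam x)
     - D * sqnorm (P (x - gam *: gradF lam x) - x).
Proof.
move=> l0 L0 DE gE m0 c0 cD n0 Hs Hm Hc Hpr Hp hx.
have li : 0 < lam^-1 by rewrite invr_gt0.
have D0 : 0 < D by rewrite DE; lra.
have mR : 0 < m%:R :> R by rewrite ltr0n.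
have g0 : 0 < gam by rewrite gE invr_gt0 mulr_gt0.
set xp := P (x - gam *: v); set xb := P (x - gam *: gradF lam x).
set u := xp - x; set dl := v - gradF lam x.
have F1a := favg_descent x xp n0 Hs.
have F1b := env_descent x xp l0 Hm.
have F2 := prox_subgrad (x - gam *: v) g0 Hc Hpr Hp hx.
rewrite -/xp in F2.
have E2 : dotv (x - gam *: v - xp) (x - xp) = sqnorm u + gam * dotv v u.
  have -> : x - gam *: v - xp = - u - gam *: v by rewrite /u opprB addrAC addrC.
  have -> : x - xp = - u by rewrite /u opprB.
  by rewrite dotvBl dotvNl dotvNr opprK dotvZl dotvNr mulrN opprK dotvC.
rewrite E2 mulrDr mulrA mulVf ?gt_eqF // mul1r in F2.
rewrite gE invrK in F2.
have two0 : (0:R) < 2 by [].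
have F3 := young (s := 2 * D) u (- dl) (mulr_gt0 two0 D0).
have F4 := young (s := 2 * m%:R) u (x - xt) (mulr_gt0 two0 mR).
have F5 := young1 u (- (xp - xb)).
have E5 : xb - x = u + - (xp - xb) by rewrite /u; apply/rowP => i; rewrite !mxE; lra.
have E4 : xp - xt = u + (x - xt) by rewrite /u; apply/rowP => i; rewrite !mxE; lra.
have F6 : sqnorm (xp - xb) <= gam ^+ 2 * sqnorm dl.
  have := prox_nonexp (x - gam *: v) (x - gam *: gradF lam x) g0 Hc Hpr Hp.
  have -> : x - gam *: v - (x - gam *: gradF lam x) = - (gam *: dl).
    by rewrite /dl; apply/rowP => i; rewrite !mxE; lra.
  by rewrite sqnormN sqnormZ.
have Ev : dotv v u = dotv dl u + dotv (gavg gfj x) u + lam^-1 * dotv (x - zeta lam x) u.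
  by rewrite -dotvZl -!dotvDl; congr dotv; rewrite /dl /gradF; apply/rowP => i; rewrite !mxE; lra.
rewrite dotvNr (dotvC u dl) in F3.
rewrite sqnormN dotvNr in F5.
rewrite E5 (sqnormD u (- (xp - xb))) dotvNr sqnormN.
rewrite E4 (sqnormD u (x - xt)).
rewrite -/u in F1a F1b.
set U := sqnorm u in F1a F1b F2 F3 F4 F5 *.
set W := sqnorm (x - xt) in F4 *.
set Dl := sqnorm dl in F3 F6 *.
set Q := sqnorm (xp - xb) in F5 F6 *.
have P1 : L * U + (2 * lam)^-1 * U <= D * U.
  rewrite -mulrDl ler_wpM2r ?sqnorm_ge0 // DE lerD2l invfM.
  lra.
have P2 : c1 * (U + 2 * dotv u (x - xt) + W) <= c1 * (1 + 2 * m%:R) * U + c1 * (1 + (2 * m%:R)^-1) * W.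
  rewrite -!mulrA -mulrDr ler_wpM2l //.
  have key : forall (U W a M mm : R), 2*a <= 2*M*U + mm*W -> U + 2*a + W <= (1+2*M)*U + (1+mm)*W.
    by move=> *; lra.
  exact: key.
have P3 : c1 * (1 + 2 * m%:R) * U <= 2 * D * U by rewrite ler_wpM2r ?sqnorm_ge0.
have P5 : D * (U + 2 * - dotv u (xp - xb) + Q) <= D * (2 * U + 2 * Q).
  apply: ler_wpM2l; first exact: ltW D0.
  have key : forall (U Q a : R), 2 * a <= U + Q -> U + 2 * a + Q <= 2 * U + 2 * Q.
    by move=> *; lra.
  exact: key.
have P6 : D * Q <= 36^-1 * D^-1 * Dl.
  have E6 : D * gam ^+ 2 = 36^-1 * D^-1.
    by rewrite gE; field; rewrite gt_eqF.
  by rewrite -E6 -mulrA ler_wpM2l // ltW.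
have P4 : (2 * D)^-1 = 2^-1 * D^-1 by rewrite invfM.
rewrite P4 sqnormN in F3.
rewrite Ev in F2.
rewrite /Phir.
have key : forall fxp exp hxp fx ex hx a1 a2 a3 a4 a5 U W Dl Q L il i2l D iD c1 K1 K2 : R,
 fxp <= fx + a1 + L*U ->
 exp <= ex + il*a2 + i2l*U ->
 hxp + (6*D*U + (a3 + a1 + il*a2)) <= hx ->
 L*U + i2l*U <= D*U ->
 c1*(U + 2*a4 + W) <= K1*U + c1*K2*W ->
 K1*U <= 2*D*U ->
 D*(U + 2 * - a5 + Q) <= D*(2*U + 2*Q) ->
 D*Q <= 36^-1 * iD * Dl ->
 2 * - a3 <= 2*D*U + 2^-1 * iD * Dl ->
 fxp + exp + hxp + c1*(U + 2*a4 + W) <= fx + ex + hx + c1*K2*W + 11/36*iD*Dl - D*(U + 2 * - a5 + Q).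
  by move=> *; lra.
exact: (key _ _ _ _ _ _ _ _ _ _ _ _ _ _ _ _ _ _ _ _ _ _ _ F1a F1b F2 P1 P2 P3 P5 P6 F3).
Qed.
End Step.
Set Implicit Arguments.
Unset Strict Implicit.
Unset Printing Implicit Defensive.

Section Resample.
Context {R : realType}.

Lemma resample (O B : finType) (upd : O -> B -> O) (proj : O -> B) (G : O -> R) :
  (forall o b, proj (upd o b) = b) -> (forall o b, upd (upd o b) (proj o) = o) ->
  #|B|%:R * \sum_o G o = \sum_o \sum_b G (upd o b).
Proof.
move=> H1 H2.
rewrite pair_bigA /= mulr_sumr.
have -> : \sum_o #|B|%:R * G o = \sum_o \sum_(b : B) G o.
  by apply: eq_bigr => o _; rewrite sumr_const mulr_natl.
rewrite pair_bigA /=.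
pose f (p : O * B) := (upd p.1 p.2, proj p.1).
have finv : cancel f f by move=> p; case: p => o0 b0; rewrite /f /= H2 H1.
by rewrite (reindex_inj (can_inj finv)) /=.
Qed.

Lemma resample_indep (O B : finType) (A : Type) (upd : O -> B -> O) (proj : O -> B)
  (X : O -> A) (phi : A -> B -> R) :
  (forall o b, proj (upd o b) = b) -> (forall o b, upd (upd o b) (proj o) = o) ->
  (forall o b, X (upd o b) = X o) ->
  #|B|%:R * \sum_o phi (X o) (proj o) = \sum_o \sum_b phi (X o) b.
Proof.
move=> H1 H2 H3.
rewrite (resample (fun o => phi (X o) (proj o)) H1 H2).
by apply: eq_bigr => o _; apply: eq_bigr => b _; rewrite H3 H1.
Qed.

End Resample.

Section Var.
Context {R : realType} {d : nat}.
Local Notation vec := 'rV[R]_d.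
Variables (n b : nat).

Definition tupd (i : 'I_b) (t : b.-tuple 'I_n) (x : 'I_n) : b.-tuple 'I_n :=
  [tuple (if j == i then x else tnth t j) | j < b].

Lemma tupd_proj i t x : tnth (tupd i t x) i = x.
Proof. by rewrite tnth_mktuple eqxx. Qed.

Lemma tupd_other i k t x : k != i -> tnth (tupd i t x) k = tnth t k.
Proof. by move=> /negbTE ki; rewrite tnth_mktuple ki. Qed.

Lemma tupd_inv i t x : tupd i (tupd i t x) (tnth t i) = t.
Proof.
apply: eq_from_tnth => j; rewrite tnth_mktuple.
by case: eqP => [-> //|/eqP ji]; rewrite tupd_other.
Qed.

Lemma var_tuple (Z : 'I_n -> vec) :
  (0 < n)%N -> (0 < b)%N ->
  \sum_(t : b.-tuple 'I_n)
     sqnorm (b%:R^-1 *: \sum_(j <- t) Z j - n%:R^-1 *: \sum_(j < n) Z j)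
  <= #|{: b.-tuple 'I_n}|%:R * b%:R^-1 * (n%:R^-1 * \sum_(j < n) sqnorm (Z j)).
Proof.
move=> n0 b0.
have nz : n%:R != 0 :> R by rewrite pnatr_eq0 -lt0n.
have bz : b%:R != 0 :> R by rewrite pnatr_eq0 -lt0n.
set Zb := n%:R^-1 *: \sum_(j < n) Z j.
pose Y j := Z j - Zb.
have sY : \sum_(j < n) Y j = 0.
  rewrite /Y sumrB sumr_const card_ord /Zb -[_ *+ n]scaler_nat scalerA mulfV // scale1r.
  by rewrite subrr.
have E1 (t : b.-tuple 'I_n) : b%:R^-1 *: \sum_(j <- t) Z j - Zb = b%:R^-1 *: \sum_(i < b) Y (tnth t i).
  rewrite big_tuple /Y sumrB sumr_const card_ord scalerBr -[Zb *+ b]scaler_nat scalerA.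
  by rewrite mulVf // scale1r.
under eq_bigr do rewrite E1 sqnormZ.
rewrite -mulr_sumr.
have E2 (t : b.-tuple 'I_n) : sqnorm (\sum_(i < b) Y (tnth t i)) =
    \sum_(i < b) \sum_(k < b) dotv (Y (tnth t i)) (Y (tnth t k)).
  rewrite /sqnorm dotv_suml; apply: eq_bigr => i _; exact: dotv_sumr.
under eq_bigr do rewrite E2.
rewrite exchange_big /=.
have E3 (i k : 'I_b) : \sum_(t : b.-tuple 'I_n) dotv (Y (tnth t i)) (Y (tnth t k)) =
   if k == i then #|{: b.-tuple 'I_n}|%:R * n%:R^-1 * \sum_(j < n) sqnorm (Y j) else 0.
  apply: (mulfI nz).
  case: eqP => [->|/eqP ki].
    have H := resample_indep (O := b.-tuple 'I_n) (B := 'I_n) (upd := tupd i) (proj := fun t => tnth t i) (X := fun _ => tt)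
       (fun (a : unit) x => sqnorm (Y x)) (tupd_proj i) (tupd_inv i) (fun _ _ => erefl).
    rewrite card_ord in H; rewrite [LHS]H.
    by rewrite sumr_const -[_ *+ _]mulr_natl; field.
  have H := resample_indep (O := b.-tuple 'I_n) (B := 'I_n) (upd := tupd i) (proj := fun t => tnth t i) (X := fun t => tnth t k)
       (fun a x => dotv (Y x) (Y a)) (tupd_proj i) (tupd_inv i) (fun t x => tupd_other t x ki).
  rewrite card_ord in H; rewrite [LHS]H mulr0.
  by apply: big1 => t _; rewrite -dotv_suml sY dotv0l.
have E4 (i : 'I_b) : \sum_(t : b.-tuple 'I_n) \sum_(k < b) dotv (Y (tnth t i)) (Y (tnth t k)) =
    #|{: b.-tuple 'I_n}|%:R * n%:R^-1 * \sum_(j < n) sqnorm (Y j).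
  rewrite exchange_big /=.
  under eq_bigr do rewrite E3.
  by rewrite -big_mkcond big_pred1_eq.
under eq_bigr do rewrite E4.
rewrite sumr_const card_ord.
have EY : \sum_(j < n) sqnorm (Y j) = \sum_(j < n) sqnorm (Z j) - n%:R * sqnorm Zb.
  rewrite /Y.
  under eq_bigr do rewrite sqnormB.
  rewrite !big_split /= sumrN -mulr_sumr -dotv_suml sumr_const card_ord.
  have -> : \sum_(j < n) Z j = n%:R *: Zb by rewrite /Zb scalerA mulfV // scale1r.
  rewrite dotvZl /sqnorm -[_ *+ n]mulr_natl; lra.
rewrite EY.
set T := #|{: b.-tuple 'I_n}|%:R.
have T0 : 0 <= T by rewrite ler0n.
set SZ := \sum_(j < n) sqnorm (Z j).
have hZ := sqnorm_ge0 Zb.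
have -> : b%:R^-1 ^+ 2 * (T * n%:R^-1 * (SZ - n%:R * sqnorm Zb) *+ b)
          = T * b%:R^-1 * (n%:R^-1 * (SZ - n%:R * sqnorm Zb)).
  rewrite -[_ *+ b]mulr_natl expr2; field; rewrite nz bz.
  done.
rewrite ler_wpM2l ?mulr_ge0 ?invr_ge0 ?ler0n // ler_wpM2l ?invr_ge0 ?ler0n //.
rewrite lerBlDr lerDl mulr_ge0 ?ler0n //.
Qed.
End Var.

Set Implicit Arguments.
Unset Strict Implicit.
Unset Printing Implicit Defensive.

Section Dep.
Context {R : realType} {d : nat}.
Local Notation vec := 'rV[R]_d.
Variable n : nat.
Variables (gfj : 'I_n -> vec -> vec) (zeta : R -> vec -> vec) (lam gam : R)
  (P : vec -> vec) (b m : nat).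

Lemma inner_dep (dr dr' : nat -> seq 'I_n) a t :
  (forall t', (t' < t)%N -> dr t' = dr' t') ->
  inner_iter gfj zeta lam gam P b dr a t = inner_iter gfj zeta lam gam P b dr' a t.
Proof.
elim: t => [//|t IH] H /=.
rewrite H // IH // => t' lt; apply: H; exact: ltnW.
Qed.

Lemma anchor_dep (dr dr' : nat -> nat -> seq 'I_n) w1 k :
  (forall k' t', (k' < k)%N -> (t' < m)%N -> dr k' t' = dr' k' t') ->
  anchor_iter gfj zeta lam gam P b m dr w1 k = anchor_iter gfj zeta lam gam P b m dr' w1 k.
Proof.
elim: k => [//|k IH] H /=.
rewrite IH; last by move=> k' t' lk lt; apply: H => //; exact: ltnW.
by apply: inner_dep => t' lt; apply: H.
Qed.

Definition oupd (S : nat) (kt : 'I_S * 'I_m) (om : sample_space n S m b) (x : b.-tuple 'I_n)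
  : sample_space n S m b := [ffun p => if p == kt then x else om p].

Lemma oupd_proj S kt om x : oupd (S:=S) kt om x kt = x.
Proof. by rewrite ffunE eqxx. Qed.

Lemma oupd_inv S kt om x : oupd (S:=S) kt (oupd kt om x) (om kt) = om.
Proof. by apply/ffunP => p; rewrite !ffunE; case: eqP => [->|]. Qed.

Lemma draws_oupd S (kt : 'I_S * 'I_m) om x k t :
  (k, t) != (val kt.1, val kt.2) -> draws (oupd kt om x) k t = draws om k t.
Proof.
move=> H; rewrite /draws.
case: insubP => [k' _ k'E|//]; case: insubP => [t' _ t'E|//].
rewrite ffunE; case: eqP => // E.
by move: H; rewrite -E /= k'E t'E eqxx.
Qed.

End Dep.

Set Implicit Arguments.
Unset Strict Implicit.
Unset Printing Implicit Defensive.

Section Main.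
Context {R : realType} {d : nat}.
Local Notation vec := 'rV[R]_d.
Variable n : nat.
Variables (fj : 'I_n -> vec -> R) (gfj : 'I_n -> vec -> vec) (L : R).
Variables (g : vec -> R) (zeta : R -> vec -> vec) (h : vec -> \bar R).
Variables (lam gam D : R) (P : vec -> vec) (S m b : nat) (w1 : vec).
Hypotheses (n0 : (0 < n)%N) (Hs : forall j, L_smooth (fj j) (gfj j) L)
  (Hm : is_moreau_selection g zeta) (Hc : convex_fun h) (Hpr : proper_fun h)
  (l0 : 0 < lam) (L0 : 0 <= L) (DE : D = L + lam^-1) (gE : gam = (6 * D)^-1)
  (HP : is_prox gam h P) (S0 : (0 < S)%N) (m0 : (0 < m)%N) (bE : b = (m ^ 2)%N)
  (hw1 : h w1 \is a fin_num).

Lemma b0 : (0 < b)%N.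
Proof. by rewrite bE expn_gt0 m0. Qed.

Lemma delta_var (x a : vec) :
  \sum_(t : b.-tuple 'I_n)
     sqnorm ((b%:R^-1 *: \sum_(j <- t) (gfj j x - gfj j a) + gavg gfj a
              + lam^-1 *: (x - zeta lam x)) - gradF gfj zeta lam x)
  <= #|{: b.-tuple 'I_n}|%:R * b%:R^-1 * (L ^+ 2 * sqnorm (x - a)).
Proof.
have E t : (b%:R^-1 *: \sum_(j <- t) (gfj j x - gfj j a) + gavg gfj a
              + lam^-1 *: (x - zeta lam x)) - gradF gfj zeta lam x
    = b%:R^-1 *: \sum_(j <- t) (gfj j x - gfj j a)
      - n%:R^-1 *: \sum_(j < n) (gfj j x - gfj j a).
  have key : forall (A B C Y : vec) (p q l : R),
      p *: A + q *: C + l *: Y - (q *: B + l *: Y) = p *: A - q *: (B - C).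
    by move=> A B C Y p q l; apply/rowP => i; rewrite !mxE; lra.
  rewrite /gradF /gavg [\sum_(j < n) (_ - _)]sumrB; exact: key.
under eq_bigr do rewrite E.
apply: (le_trans (var_tuple _ n0 b0)).
rewrite ler_wpM2l ?mulr_ge0 ?invr_ge0 ?ler0n //.
have nz : n%:R != 0 :> R by rewrite pnatr_eq0 -lt0n.
have -> : L ^+ 2 * sqnorm (x - a) = n%:R^-1 * \sum_(j < n) (L ^+ 2 * sqnorm (x - a)).
  by rewrite sumr_const card_ord; apply/(mulfI nz); rewrite [RHS]mulrA mulfV // mul1r mulr_natl.
rewrite ler_wpM2l ?invr_ge0 ?ler0n //.
apply: ler_sum => j _.
have [_ Hl] := Hs j.
have := Hl x a.
rewrite -!enorm_sq => H.
by rewrite -exprMn lerXn2r ?nnegrE ?enorm_ge0 ?mulr_ge0 ?enorm_ge0.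
Qed.


Local Notation X om k t := (vrspa_iter gfj zeta lam gam P w1 (om : sample_space n S m b) k t).

Lemma inner_fin (dr : nat -> seq 'I_n) a t : h a \is a fin_num ->
  h (inner_iter gfj zeta lam gam P b dr a t) \is a fin_num.
Proof. by case: t => [//|t] _ /=; exact: (prox_fin _ Hpr HP). Qed.

Lemma X_fin om k t : h (X om k t) \is a fin_num.
Proof.
apply: inner_fin.
elim: k => [//|k IH] /=; exact: inner_fin.
Qed.

Lemma X_succ om (k : 'I_S) (t : 'I_m) :
  X om k t.+1 = vr_step gfj zeta lam gam P b (tval (om (k, t))) (X om k 0) (X om k t).
Proof. by rewrite /vrspa_iter /= /draws !valK. Qed.

Lemma X_indep (kt : 'I_S * 'I_m) om x t : (t <= kt.2)%N ->
  X (oupd kt om x) kt.1 t = X om kt.1 t.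
Proof.
move=> tle; rewrite /vrspa_iter.
rewrite (anchor_dep gfj zeta lam gam P b (dr' := draws om)); last first.
  move=> k' t' lk _; apply: draws_oupd.
  by apply/negP => /eqP [E _]; move: lk; rewrite E ltnn.
apply: inner_dep => t' lt; apply: draws_oupd.
by apply/negP => /eqP [E]; move: lt; rewrite E ltnNge tle.
Qed.


Definition kap : R := 11 / 36 * D^-1.
Definition rr : R := kap * L ^+ 2 * b%:R^-1.
Definition cc (t : nat) : R := 2 * rr * (m%:R - t%:R).

Lemma D0 : 0 < D.
Proof.
have li : 0 < lam^-1 by rewrite invr_gt0.
by rewrite DE (lt_le_trans li) // lerDr.
Qed.

Lemma LD : L ^+ 2 * D^-1 <= D.
Proof.
have D0' := D0.
rewrite ler_pdivrMr // -expr2 lerXn2r ?nnegrE //; first exact: ltW.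
have li : 0 < lam^-1 by rewrite invr_gt0.
by rewrite DE lerDl ltW.
Qed.

Lemma rr_ge0 : 0 <= rr.
Proof. by rewrite /rr /kap !mulr_ge0 ?invr_ge0 ?ler0n ?sqr_ge0 // ltW // D0. Qed.

Lemma rr_M2 : rr * m%:R ^+ 2 = kap * L ^+ 2.
Proof.
have mz : m%:R ^+ 2 != 0 :> R by rewrite expf_eq0 /= pnatr_eq0 -lt0n m0.
by rewrite /rr bE natrX -mulrA mulVf // mulr1.
Qed.

Lemma coef1 t : (t < m)%N -> cc t.+1 * (1 + (2 * m%:R)^-1) + rr <= cc t.
Proof.
move=> tm.
have M0 : 0 < m%:R :> R by rewrite ltr0n.
have hq : t.+1%:R <= m%:R :> R by rewrite ler_nat.
rewrite /cc -natr1 in hq *.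
set M := m%:R in M0 hq *; set T := t%:R in hq *.
have r0 := rr_ge0.
have T0 : 0 <= T by rewrite ler0n.
have h1 : (M - (T + 1)) * M^-1 <= 1 by rewrite ler_pdivrMr // mul1r; lra.
have h2 := ler_wpM2l r0 h1.
have E : (2 * M)^-1 = 2^-1 * M^-1 by rewrite invfM.
rewrite E.
have key : forall (r q iM : R), r * (q * iM) <= r * 1 ->
   2 * r * q * (1 + 2^-1 * iM) + r <= 2 * r * (q + 1) by move=> *; lra.
have := key rr (M - (T + 1)) M^-1 h2.
by have -> : M - (T + 1) + 1 = M - T by lra.
Qed.

Lemma coef2 t : (t < m)%N -> 0 <= cc t.+1 /\ cc t.+1 * (1 + 2 * m%:R) <= 2 * D.
Proof.
move=> tm.
have M1 : 1 <= m%:R :> R by rewrite ler1n.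
have hq : t.+1%:R <= m%:R :> R by rewrite ler_nat.
have r0 := rr_ge0.
have E := rr_M2.
have LD' := LD.
have D0' := D0.
rewrite /cc -natr1 in hq *.
set M := m%:R in M1 hq E *; set T := t%:R in hq *.
have T0 : 0 <= T by rewrite ler0n.
set q := M - (T + 1).
have q0 : 0 <= q by rewrite /q; lra.
have qM : q <= M by rewrite /q; lra.
have two0 : (0:R) <= 2 by rewrite ler0n.
split; first by apply: mulr_ge0 => //; apply: mulr_ge0.
have h1 : 2 * rr * q * (1 + 2 * M) <= 2 * rr * M * (1 + 2 * M).
  apply: ler_wpM2r; first by rewrite addr_ge0 ?mulr_ge0 ?ler0n.
  by apply: ler_wpM2l => //; apply: mulr_ge0.
have h2 : 2 * rr * M * (1 + 2 * M) <= 6 * (rr * M ^+ 2).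
  have M0 : 0 <= M by apply: le_trans M1; rewrite ler01.
  have : 0 <= rr * M * (M - 1) by apply: mulr_ge0; [exact: mulr_ge0 | rewrite subr_ge0].
  rewrite expr2; lra.
rewrite E /kap in h2.
have key : forall (x y z iD L2 : R), x <= y -> y <= 6 * (11 / 36 * iD * L2) -> L2 * iD <= D -> 0 < D -> x <= 2 * D.
  by move=> *; lra.
exact: (key _ _ _ _ _ h1 h2 LD' D0').
Qed.


Lemma g0 : 0 < gam.
Proof. by rewrite gE invr_gt0 mulr_gt0 // D0. Qed.

Lemma Gsq_eq x : D * sqnorm (P (x - gam *: gradF gfj zeta lam x) - x)
  = (36 * D)^-1 * sqnorm (grad_map gfj zeta lam gam P x).
Proof.
rewrite /grad_map sqnormZ -sqnormN opprB.
rewrite -/(gradF gfj zeta lam x) mulrA; congr (_ * _).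
have D0' := D0.
rewrite gE invrK; field; exact: lt0r_neq0.
Qed.

Definition Psi k t := \sum_(om : sample_space n S m b)
   (Phir fj g zeta h lam (X om k t) + cc t * sqnorm (X om k t - X om k 0)).

Definition Vd (p : vec * vec) (bt : seq 'I_n) : vec :=
  b%:R^-1 *: \sum_(j <- bt) (gfj j p.1 - gfj j p.2) + gavg gfj p.2
  + lam^-1 *: (p.1 - zeta lam p.1).

Lemma exp_step (k : 'I_S) (t : 'I_m) :
  Psi k t.+1 + (36 * D)^-1 * \sum_(om : sample_space n S m b)
      sqnorm (grad_map gfj zeta lam gam P (X om k t)) <= Psi k t.
Proof.
set kt := (k, t).
pose Y (om : sample_space n S m b) := (X om k t, X om k 0).
have [c0 cD] := coef2 (ltn_ord t).
have pw om : Phir fj g zeta h lam (X om k t.+1) + cc t.+1 * sqnorm (X om k t.+1 - X om k 0)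
    + (36 * D)^-1 * sqnorm (grad_map gfj zeta lam gam P (X om k t))
  <= Phir fj g zeta h lam (X om k t) + cc t.+1 * (1 + (2 * m%:R)^-1) * sqnorm (X om k t - X om k 0)
    + kap * sqnorm (Vd (Y om) (tval (om kt)) - gradF gfj zeta lam (X om k t)).
  rewrite X_succ -Gsq_eq.
  have := step_ineq (X om k 0) (Vd (Y om) (tval (om kt))) l0 L0 DE gE m0 c0 cD n0 Hs Hm Hc Hpr HP (X_fin om k t).
  rewrite /vr_step /kap.
  set A := Phir _ _ _ _ _ _.
  move=> H.
  have key : forall (a b1 c e f : R), a <= b1 + c - e -> a + e <= b1 + c by move=> *; lra.
  exact: key.
have HY om x : Y (oupd kt om x) = Y om.
  by rewrite /Y (X_indep (kt := kt)) // (X_indep (kt := kt)).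
have var : \sum_(om : sample_space n S m b)
     sqnorm (Vd (Y om) (tval (om kt)) - gradF gfj zeta lam (Y om).1)
   <= \sum_(om : sample_space n S m b) b%:R^-1 * (L ^+ 2 * sqnorm (X om k t - X om k 0)).
  have H := resample_indep (upd := oupd kt) (proj := fun om => om kt) (X := Y)
     (fun p (bt : b.-tuple 'I_n) => sqnorm (Vd p (tval bt) - gradF gfj zeta lam p.1))
     (oupd_proj kt) (oupd_inv kt) HY.
  have B0 : 0 < #|{: b.-tuple 'I_n}|%:R :> R.
    rewrite ltr0n card_tuple card_ord expn_gt0 n0 //.
  rewrite -(ler_pM2l B0) H mulr_sumr.
  apply: ler_sum => om _.
  rewrite mulrA.
  exact: (delta_var (Y om).1 (Y om).2).
apply: (le_trans (y := \sum_(om : sample_space n S m b)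
   (Phir fj g zeta h lam (X om k t) + cc t.+1 * (1 + (2 * m%:R)^-1) * sqnorm (X om k t - X om k 0)
    + kap * sqnorm (Vd (Y om) (tval (om kt)) - gradF gfj zeta lam (X om k t))))).
  rewrite /Psi mulr_sumr -big_split; apply: ler_sum => om _; exact: pw om.
rewrite big_split /= -mulr_sumr.
have kap0 : 0 <= kap by rewrite /kap mulr_ge0 ?invr_ge0 ?ltW // D0.
apply: (le_trans (lerD (lexx _) (ler_wpM2l kap0 var))).
rewrite mulr_sumr -big_split; apply: ler_sum => om _.
have C1 := coef1 (ltn_ord t).
have W0 := sqnorm_ge0 (X om k t - X om k 0).
have C2 := ler_wpM2r W0 C1.
rewrite /rr in C2.
have key : forall (ph c1 W kp ib L2 ct : R),
   (c1 + kp * L2 * ib) * W <= ct * W ->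
   ph + c1 * W + kp * (ib * (L2 * W)) <= ph + ct * W by move=> *; lra.
exact: (key _ _ _ _ _ _ _ C2).
Qed.

Lemma epoch (k : 'I_S) t : (t <= m)%N ->
  Psi k t + (36 * D)^-1 * \sum_(t' < t) \sum_(om : sample_space n S m b)
      sqnorm (grad_map gfj zeta lam gam P (X om k t')) <= Psi k 0.
Proof.
elim: t => [_|t IH tm]; first by rewrite big_ord0 mulr0 addr0.
rewrite big_ord_recr /= mulrDr addrA.
have := exp_step k (Ordinal tm).
rewrite /= => H.
apply: le_trans (IH (ltnW tm)).
set a := (36 * D)^-1 * _ in H *.
set c := (36 * D)^-1 * _.
have key : forall (p1 p0 x y : R), p1 + y <= p0 -> p1 + x + y <= p0 + x by move=> *; lra.
exact: key.
Qed.

Lemma sqnorm0 : sqnorm (0 : vec) = 0.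
Proof. exact: dotv0l. Qed.

Lemma Psi_next k : Psi k m = Psi k.+1 0.
Proof.
rewrite /Psi /cc; apply: eq_bigr => om _.
rewrite (subrr (m%:R : R)) mulr0 mul0r addr0.
by rewrite subrr sqnorm0 mulr0 addr0.
Qed.

Lemma total k : (k <= S)%N ->
  Psi k 0 + (36 * D)^-1 * \sum_(k' < k) \sum_(t < m) \sum_(om : sample_space n S m b)
      sqnorm (grad_map gfj zeta lam gam P (X om k' t)) <= Psi 0 0.
Proof.
elim: k => [_|k IH kS]; first by rewrite big_ord0 mulr0 addr0.
rewrite big_ord_recr /= mulrDr addrA.
have := epoch (Ordinal kS) (leqnn m).
rewrite /= Psi_next => H.
apply: le_trans (IH (ltnW kS)).
have key : forall (p1 p0 x y : R), p1 + y <= p0 -> p1 + x + y <= p0 + x by move=> *; lra.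
exact: key.
Qed.

Lemma main_real (Phistar : R) :
  (forall x, h x \is a fin_num -> Phistar <= Phir fj g zeta h lam x) ->
  vrspa_expected_sqgrad gfj zeta lam gam P S m b w1
  <= 36 * (Phir fj g zeta h lam w1 - Phistar) * (D / (S * m)%:R).
Proof.
move=> Hmin.
have H := total (leqnn S).
have E0 : Psi 0 0 = #|{: sample_space n S m b}|%:R * Phir fj g zeta h lam w1.
  rewrite /Psi /cc.
  have XE om : X om 0 0 = w1 by [].
  under eq_bigr do rewrite subrr sqnorm0 mulr0 addr0 XE.
  by rewrite sumr_const mulr_natl.
have ES : #|{: sample_space n S m b}|%:R * Phistar <= Psi S 0.
  rewrite /Psi mulr_natl -sumr_const.
  apply: ler_sum => om _.
  by rewrite subrr sqnorm0 mulr0 addr0; apply: Hmin; exact: X_fin.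
rewrite E0 in H.
set O := #|{: sample_space n S m b}|%:R in H ES E0 *.
set G := \sum_(k' < S) _ in H.
have O0 : 0 < O.
  rewrite /O ltr0n card_ffun card_tuple card_ord expn_gt0 expn_gt0 n0 //.
have SM0 : 0 < (S * m)%:R :> R by rewrite ltr0n muln_gt0 S0 m0.
have D0' := D0.
have HG : G <= 36 * D * (O * (Phir fj g zeta h lam w1 - Phistar)).
  have H2 : (36 * D)^-1 * G <= O * (Phir fj g zeta h lam w1 - Phistar).
    rewrite mulrBr; move: H ES; set p := Psi S 0.
    have key : forall (p a b c : R), p + a <= b -> c <= p -> a <= b - c by move=> *; lra.
    exact: key.
  rewrite -ler_pdivrMl ?mulr_gt0 //.
have EG : vrspa_expected_sqgrad gfj zeta lam gam P S m b w1 = O^-1 * ((S * m)%:R^-1 * G).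
  rewrite /vrspa_expected_sqgrad -/O -mulr_sumr; congr (_ * (_ * _)).
  rewrite /G exchange_big /=; apply: eq_bigr => k _.
  by rewrite exchange_big.
rewrite EG.
rewrite -ler_pdivlMl ?invr_gt0 // invrK -ler_pdivlMl ?invr_gt0 // invrK.
apply: (le_trans HG).
rewrite le_eqVlt; apply/orP; left; apply/eqP.
field.
by rewrite !pnatr_eq0 -!lt0n m0 S0.
Qed.

End Main.

Unset Implicit Arguments.
Set Strict Implicit.
Set Printing Implicit Defensive.

Theorem lemma7 (R : realType) (d n : nat)
  (fj : 'I_n -> 'rV[R]_d -> R) (gfj : 'I_n -> 'rV[R]_d -> 'rV[R]_d) (L : R)
  (g : 'rV[R]_d -> R) (zeta : R -> 'rV[R]_d -> 'rV[R]_d)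
  (h : 'rV[R]_d -> \bar R)
  (S m : nat) (theta : R) (w1 wstar : 'rV[R]_d) (P : 'rV[R]_d -> 'rV[R]_d) :
  (0 < n)%N ->
  (forall j, L_smooth (fj j) (gfj j) L) ->
  is_moreau_selection g zeta ->
  proper_fun h -> closed_fun h -> convex_fun h ->
  (0 < S)%N -> (0 < m)%N ->
  let lam := (S * m)%:R `^ (- theta) in
  let gam := (6 * (L + (S * m)%:R `^ theta))^-1 in
  (forall w, (PhiT fj g zeta h lam wstar <= PhiT fj g zeta h lam w)%E) ->
  is_prox gam h P ->
  ((vrspa_expected_sqgrad gfj zeta lam gam P S m (m ^ 2) w1)%:E
   <= 36%:E * (PhiT fj g zeta h lam w1 - PhiT fj g zeta h lam wstar)
        * ((L + (S * m)%:R `^ theta) / (S * m)%:R)%:E)%E.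
Proof.
move=> n0 Hs Hm Hpr _ Hc S0 m0 lam gam Hmin HP.
have SM0 : 0 < (S * m)%:R :> R by rewrite ltr0n muln_gt0 S0 m0.
have l0 : 0 < lam by rewrite /lam powR_gt0.
have lE : lam^-1 = (S * m)%:R `^ theta by rewrite /lam powRN invrK.
set D := L + (S * m)%:R `^ theta.
have DE : D = L + lam^-1 by rewrite lE.
have gE : gam = (6 * D)^-1 by [].
have PhiE x : h x \is a fin_num -> PhiT fj g zeta h lam x = (Phir fj g zeta h lam x)%:E.
  by move=> hx; rewrite /PhiT /Phir -(fineK hx) -EFinD /=.
have hstar : h wstar \is a fin_num.
  have [hN [x0 hx0]] := Hpr.
  rewrite fin_numE; apply/andP; split; first exact/eqP/hN.
  apply/eqP => E; have := Hmin x0; rewrite /PhiT E.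
  case Ex: (h x0) hx0 (hN x0) => [r| |] //= _ _.
have [L0|Lneg] := leP 0 L; last first.
  have allz : forall v : 'rV[R]_d, v = 0.
    move=> v; have [_ Hl] := Hs (Ordinal n0).
    have := Hl v 0; rewrite subr0 => H.
    have e0 : enorm v <= 0.
      have h1 := le_trans (enorm_ge0 _) H.
      by rewrite nmulr_rge0 in h1.
    apply: sqnorm_eq0; rewrite -enorm_sq.
    have -> : enorm v = 0 by apply/eqP; rewrite eq_le e0 enorm_ge0.
    by rewrite expr0n.
  have sq0 (v : 'rV[R]_d) : sqnorm v = 0 by rewrite (allz v) sqnorm0.
  have -> : vrspa_expected_sqgrad gfj zeta lam gam P S m (m ^ 2) w1 = 0.
    rewrite /vrspa_expected_sqgrad big1 ?mulr0 // => om _.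
    by rewrite big1 ?mulr0 // => k _; rewrite big1 // => t _; rewrite sq0.
  rewrite (allz w1) -(allz wstar) PhiE //.
  by rewrite -EFinB -!EFinM lee_fin subrr mulr0 mul0r.
have D0 : 0 < D.
  by rewrite /D (lt_le_trans (powR_gt0 theta SM0)) // lerDr.
have q0 : 0 < D / (S * m)%:R by rewrite divr_gt0.
rewrite (PhiE wstar) //.
have [hw1|hw1] := boolP (h w1 \is a fin_num); last first.
  have E : h w1 = +oo%E.
    move: hw1; rewrite fin_numE negb_and !negbK => /orP [/eqP E|/eqP //].
    by have [hN _] := Hpr; case: (hN w1).
  rewrite /PhiT E /= -/D.
  rewrite mulry gtr0_sg // mul1e mulyr gtr0_sg // mul1e.
  exact: leey.
rewrite (PhiE w1) // -EFinB -!EFinM lee_fin -/D.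
apply: (main_real n0 Hs Hm Hc Hpr l0 L0 DE gE HP S0 m0 (erefl _) hw1).
move=> x hx.
by have := Hmin x; rewrite !PhiE //.
Qed.
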